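(* Let $M=I\times F_1\times F_2\times F_3$ with metric $g=-dt^2\oplus\phi^{2p_1}g_{F_1}\oplus\phi^{2p_2}g_{F_2}\oplus\phi^{2p_3}g_{F_3}$, where $I\subset\mathbb{R}$ is an open interval, $\phi:I\to(0,\infty)$ is smooth, $p_1,p_2,p_3\in\mathbb{R}$ with $p_i\neq p_j$ for some $i,j\in\{1,2,3\}$, and each $(F_i,g_{F_i})$ is a one-dimensional Riemannian manifold; let $\zeta=p_1+p_2+p_3$, $\eta=p_1^2+p_2^2+p_3^2$, and let $\overline\nabla$ be the semi-symmetric metric connection determined by $P=\frac{\partial}{\partial t}$. Then $(M,\overline\nabla)$ is Einstein with Einstein constant $\lambda$ if and only if $\lambda=0$, $\frac{2\eta}{\zeta^2}=1$, and $\phi=c_0e^{\frac{2t}{\zeta}}$ for a constant $c_0$.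
   Context: $\nabla$ is the Levi-Civita connection of $g$, $\pi(X)=g(X,P)$, and $\overline\nabla_XY=\nabla_XY+\pi(Y)X-g(X,Y)P$. Conventions: $\overline R(X,Y)Z=\overline\nabla_X\overline\nabla_YZ-\overline\nabla_Y\overline\nabla_XZ-\overline\nabla_{[X,Y]}Z$, $\overline{\mathrm{Ric}}(X,Y)=\sum_k\varepsilon_kg(\overline R(X,E_k)Y,E_k)$ for a local orthonormal frame $(E_k)$, $\varepsilon_k=g(E_k,E_k)$; Einstein with constant $\lambda$ means $\overline{\mathrm{Ric}}=\lambda g$. *)

(* Defs.v *)
From Stdlib Require Import Reals.
From Coquelicot Require Import Coquelicot.
Open Scope R_scope.

(* Local coordinates on M = I x F1 x F2 x F3:  x 0 = t,  x 1, x 2, x 3 =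
   arc-length coordinates on the one-dimensional Riemannian manifolds F_i
   (so g_{F_i} = dx_i^2).  A point is x : nat -> R, only x 0..x 3 matter. *)
Definition Pt := nat -> R.
Definition VF := Pt -> nat -> R.

Definition sum4 (f : nat -> R) : R := sum_f_R0 f 3.

Definition pd (a : nat) (f : Pt -> R) (x : Pt) : R :=
  Derive (fun s => f (fun i => if Nat.eqb i a then s else x i)) (x a).

Definition pvec (p1 p2 p3 : R) (i : nat) : R :=
  match i with 1%nat => p1 | 2%nat => p2 | _ => p3 end.

Definition gc (phi : R -> R) (p : nat -> R) (a b : nat) (x : Pt) : R :=
  if Nat.eqb a b then
    (if Nat.eqb a 0 then -1 else Rpower (phi (x 0%nat)) (2 * p a))
  else 0.

Definition gm phi p (u v : nat -> R) (x : Pt) : R :=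
  sum4 (fun a => sum4 (fun b => gc phi p a b x * u a * v b)).

(* Christoffel symbols of the Levi-Civita connection (metric is diagonal,
   so g^{cd} = delta_{cd} / g_{cc}) *)
Definition Gamma phi p (c a b : nat) (x : Pt) : R :=
  / (2 * gc phi p c c x) *
  (pd a (gc phi p b c) x + pd b (gc phi p a c) x - pd c (gc phi p a b) x).

Definition nablaLC phi p (X Y : VF) : VF := fun x c =>
  sum4 (fun a => X x a * pd a (fun y => Y y c) x) +
  sum4 (fun a => sum4 (fun b => Gamma phi p c a b x * X x a * Y x b)).

Definition Pf : VF := fun _ c => if Nat.eqb c 0 then 1 else 0.

Definition nablabar phi p (X Y : VF) : VF := fun x c =>
  nablaLC phi p X Y x c + gm phi p (Y x) (Pf x) x * X x c
  - gm phi p (X x) (Y x) x * Pf x c.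

Definition bracket (X Y : VF) : VF := fun x c =>
  sum4 (fun a => X x a * pd a (fun y => Y y c) x - Y x a * pd a (fun y => X y c) x).

Definition curv phi p (X Y Z : VF) : VF := fun x =>
  fun c => nablabar phi p X (nablabar phi p Y Z) x c
         - nablabar phi p Y (nablabar phi p X Z) x c
         - nablabar phi p (bracket X Y) Z x c.

Definition coord (a : nat) : VF := fun _ c => if Nat.eqb c a then 1 else 0.

Definition frame phi p (k : nat) : VF := fun x c =>
  if Nat.eqb c k then / sqrt (Rabs (gc phi p k k x)) else 0.

Definition epsk phi p (k : nat) (x : Pt) : R :=
  gm phi p (frame phi p k x) (frame phi p k x) x.

Definition Ricbar phi p (X Y : VF) (x : Pt) : R :=
  sum4 (fun k => epsk phi p k x *
                 gm phi p (curv phi p X (frame phi p k) Y x) (frame phi p k x) x).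

Definition inI (a b : Rbar) (t : R) : Prop := Rbar_lt a t /\ Rbar_lt t b.

(* Einstein with constant lambda (checked on coordinate fields; Ric is tensorial) *)
Definition Einstein (a b : Rbar) phi p (lambda : R) : Prop :=
  forall x : Pt, inI a b (x 0%nat) ->
  forall i j : nat, (i < 4)%nat -> (j < 4)%nat ->
    Ricbar phi p (coord i) (coord j) x = lambda * gc phi p i j x.

(* Main.v *)
Require Import Defs.
From Stdlib Require Import Reals Lia Lra FunctionalExtensionality.
From Coquelicot Require Import Coquelicot.
Open Scope R_scope.

Definition TF := nat -> R -> R.
Definition mkV (X : TF) : VF := fun y c => X c (y 0%nat).
Definition gcT (phi : R -> R) (p : nat -> R) (a b : nat) (s : R) : R :=
  if Nat.eqb a b then
    (if Nat.eqb a 0 then -1 else Rpower (phi s) (2 * p a))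
  else 0.
Definition gmT phi p (u v : nat -> R) (s : R) : R :=
  sum4 (fun a => sum4 (fun b => gcT phi p a b s * u a * v b)).
Definition pdT phi p (a b c : nat) (s : R) : R :=
  if Nat.eqb a 0 then Derive (gcT phi p b c) s else 0.
Definition GammaT phi p (c a b : nat) (s : R) : R :=
  / (2 * gcT phi p c c s) * (pdT phi p a b c s + pdT phi p b a c s - pdT phi p c a b s).
Definition PT : TF := fun c _ => if Nat.eqb c 0 then 1 else 0.
Definition coordT (a : nat) : TF := fun c _ => if Nat.eqb c a then 1 else 0.
Definition frameT phi p (k : nat) : TF := fun c s =>
  if Nat.eqb c k then / sqrt (Rabs (gcT phi p k k s)) else 0.
Definition nbT phi p (X W : TF) : TF := fun c s =>
  (X 0%nat s * Derive (W c) s +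
   sum4 (fun a => sum4 (fun b => GammaT phi p c a b s * X a s * W b s)))
  + gmT phi p (fun d => W d s) (fun d => PT d s) s * X c s
  - gmT phi p (fun d => X d s) (fun d => W d s) s * PT c s.
Definition brT (X Y : TF) : TF := fun c s =>
  X 0%nat s * Derive (Y c) s - Y 0%nat s * Derive (X c) s.
Definition curvT phi p (X Y Z : TF) : TF := fun c s =>
  nbT phi p X (nbT phi p Y Z) c s - nbT phi p Y (nbT phi p X Z) c s
  - nbT phi p (brT X Y) Z c s.
Definition epsT phi p k s := gmT phi p (fun c => frameT phi p k c s) (fun c => frameT phi p k c s) s.
Definition RicT phi p (X Y : TF) (s : R) : R :=
  sum4 (fun k => epsT phi p k s *
     gmT phi p (fun c => curvT phi p X (frameT phi p k) Y c s) (fun c => frameT phi p k c s) s).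

Lemma pd_mk (a : nat) (v : R -> R) (x : Pt) :
  pd a (fun y => v (y 0%nat)) x = if Nat.eqb a 0 then Derive v (x 0%nat) else 0.
Proof.
  unfold pd. destruct a; simpl. reflexivity. apply Derive_const.
Qed.

Lemma nablabar_mkV phi p X W : nablabar phi p (mkV X) (mkV W) = mkV (nbT phi p X W).
Proof.
  apply functional_extensionality; intro y; apply functional_extensionality; intro c.
  unfold nablabar, nablaLC, mkV, nbT, Gamma, GammaT, pdT, sum4.
  assert (E : forall a b c, pd a (gc phi p b c) y = if Nat.eqb a 0 then Derive (gcT phi p b c) (y 0%nat) else 0).
  { intros a0 b0 c0. exact (pd_mk a0 (gcT phi p b0 c0) y). }
  cbn [sum_f_R0]. rewrite !E. rewrite !(pd_mk _ (W c) y). simpl. unfold gm, gmT, Pf, PT, gc, gcT. ring.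
Qed.

Lemma bracket_mkV X Y : bracket (mkV X) (mkV Y) = mkV (brT X Y).
Proof.
  apply functional_extensionality; intro y; apply functional_extensionality; intro c.
  unfold bracket, mkV, brT, sum4.
  cbn [sum_f_R0]. rewrite !(pd_mk _ (Y c) y), !(pd_mk _ (X c) y). simpl. ring.
Qed.

Lemma curv_mkV phi p X Y Z : curv phi p (mkV X) (mkV Y) (mkV Z) = mkV (curvT phi p X Y Z).
Proof.
  unfold curv. rewrite !nablabar_mkV, bracket_mkV, !nablabar_mkV. reflexivity.
Qed.

Lemma Ricbar_mk phi p i j x :
  Ricbar phi p (coord i) (coord j) x = RicT phi p (coordT i) (coordT j) (x 0%nat).
Proof.
  unfold Ricbar, RicT, epsk, epsT.
  change (coord i) with (mkV (coordT i)). change (coord j) with (mkV (coordT j)).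
  change (frame phi p) with (fun k => mkV (frameT phi p k)).
  cbv beta. f_equal. apply functional_extensionality; intro k. rewrite !curv_mkV. reflexivity.
Qed.

Definition uf (phi : R -> R) (s : R) := Derive phi s / phi s.
Definition gk (phi : R -> R) (p : nat -> R) (a : nat) (s : R) := Rpower (phi s) (2 * p a).

Definition Acl phi p (a b c : nat) (s : R) : R :=
  match a, b with
  | O, O => 0
  | O, S _ => if Nat.eqb c b then p b * uf phi s else 0
  | S _, O => if Nat.eqb c a then p a * uf phi s - 1 else 0
  | S _, S _ => if andb (Nat.eqb a b) (Nat.eqb c 0) then gk phi p a s * (p a * uf phi s - 1) else 0
  end.

Lemma dRp phi s q : 0 < phi s -> ex_derive phi s ->
  Derive (fun s => Rpower (phi s) q) s = q * uf phi s * Rpower (phi s) q.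
Proof.
  intros H1 H2. apply is_derive_unique. unfold Rpower, uf.
  auto_derive. repeat split; auto. unfold Rdiv. rewrite Rmult_1_l. reflexivity.
Qed.

Lemma Rpower_pos x q : 0 < Rpower x q.
Proof. unfold Rpower. apply exp_pos. Qed.

Lemma nbT_coord phi p i c s W : 0 < phi s -> ex_derive phi s -> (i < 4)%nat -> (c < 4)%nat ->
  nbT phi p (coordT i) W c s =
  (if Nat.eqb i 0 then Derive (W c) s else 0) + sum4 (fun b => W b s * Acl phi p i b c s).
Proof.
  intros H1 H2 Hi Hc.
  assert (P1 := Rpower_pos (phi s) (2 * p 1%nat)).
  assert (P2 := Rpower_pos (phi s) (2 * p 2%nat)).
  assert (P3 := Rpower_pos (phi s) (2 * p 3%nat)).
  destruct i as [|[|[|[|i]]]]; try lia; destruct c as [|[|[|[|c]]]]; try lia;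
  unfold nbT, GammaT, pdT, gmT, sum4, coordT, PT, gcT, Acl, gk; simpl;
  rewrite ?Derive_const, ?dRp by auto; field; lra.
Qed.

Lemma nbT_lin phi p X W c s : (c < 4)%nat ->
  nbT phi p X W c s = sum4 (fun a => X a s * nbT phi p (coordT a) W c s).
Proof.
  intros Hc. destruct c as [|[|[|[|c]]]]; try lia;
  unfold nbT, gmT, sum4, coordT, PT, gcT; simpl; ring.
Qed.

Lemma nbT_frame phi p k W c s : (k < 4)%nat -> (c < 4)%nat ->
  nbT phi p (frameT phi p k) W c s = frameT phi p k k s * nbT phi p (coordT k) W c s.
Proof.
  intros Hk Hc. rewrite nbT_lin by auto.
  destruct k as [|[|[|[|k]]]]; try lia; unfold sum4, frameT; simpl; ring.
Qed.

Lemma M_val phi p i j c s : 0 < phi s -> ex_derive phi s -> (i < 4)%nat -> (j < 4)%nat -> (c < 4)%nat ->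
  nbT phi p (coordT i) (coordT j) c s = Acl phi p i j c s.
Proof.
  intros H1 H2 Hi Hj Hc. rewrite nbT_coord by auto.
  unfold coordT. rewrite Derive_const.
  destruct j as [|[|[|[|j]]]]; try lia; unfold sum4; simpl; destruct (Nat.eqb i 0); ring.
Qed.

Lemma NF_val phi p k j c s : 0 < phi s -> ex_derive phi s -> (k < 4)%nat -> (j < 4)%nat -> (c < 4)%nat ->
  nbT phi p (frameT phi p k) (coordT j) c s = frameT phi p k k s * Acl phi p k j c s.
Proof.
  intros. rewrite nbT_frame, M_val by auto. reflexivity.
Qed.

Lemma loc_I (a b : Rbar) t : inI a b t -> locally t (inI a b).
Proof.
  intros H. apply (locally_open (fun u : R => Rbar_lt a u /\ Rbar_lt u b)).
  - apply open_and; [apply open_Rbar_gt | apply open_Rbar_lt].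
  - auto.
  - exact H.
Qed.

Lemma ex_uf phi t : 0 < phi t -> ex_derive phi t -> ex_derive (Derive phi) t -> ex_derive (uf phi) t.
Proof.
  intros H1 H2 H3. unfold uf. auto_derive. repeat split; auto. lra.
Qed.

Lemma ex_gk phi p a t : 0 < phi t -> ex_derive phi t -> ex_derive (gk phi p a) t.
Proof.
  intros H1 H2. unfold gk, Rpower. auto_derive. repeat split; auto.
Qed.

Lemma dgk phi p a t : 0 < phi t -> ex_derive phi t ->
  Derive (gk phi p a) t = 2 * p a * uf phi t * gk phi p a t.
Proof. intros. unfold gk. apply dRp; auto. Qed.

Definition dAclV phi p (a b c : nat) (t : R) : R :=
  match a, b with
  | O, O => 0
  | O, S _ => if Nat.eqb c b then p b * Derive (uf phi) t else 0
  | S _, O => if Nat.eqb c a then p a * Derive (uf phi) t else 0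
  | S _, S _ => if andb (Nat.eqb a b) (Nat.eqb c 0) then
       2 * p a * uf phi t * gk phi p a t * (p a * uf phi t - 1)
       + gk phi p a t * (p a * Derive (uf phi) t) else 0
  end.

Lemma dAcl_val phi p a b c t : 0 < phi t -> ex_derive phi t -> ex_derive (Derive phi) t ->
  Derive (Acl phi p a b c) t = dAclV phi p a b c t /\ ex_derive (Acl phi p a b c) t.
Proof.
  intros H1 H2 H3.
  assert (U := ex_uf phi t H1 H2 H3).
  assert (G := fun a => ex_gk phi p a t H1 H2).
  assert (DG := fun a => dgk phi p a t H1 H2).
  destruct a as [|a]; destruct b as [|b]; unfold Acl, dAclV;
  repeat match goal with |- context [if ?x then _ else _] => destruct x end;
  try (split; [apply Derive_const | apply ex_derive_const]);
  split; try (apply is_derive_unique; auto_derive; [repeat split; auto|]);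
  try (auto_derive; repeat split; auto).
  all: try change (fun x : R => uf phi x) with (uf phi); try rewrite DG; ring.
Qed.

Definition Rcl phi p (i k j c : nat) (t : R) : R :=
  (if Nat.eqb i 0 then dAclV phi p k j c t else 0)
  + sum4 (fun b => Acl phi p k j b t * Acl phi p i b c t)
  - (if Nat.eqb k 0 then dAclV phi p i j c t else 0)
  - sum4 (fun b => Acl phi p i j b t * Acl phi p k b c t).

Lemma frame00 phi p s : frameT phi p 0%nat 0%nat s = 1.
Proof.
  unfold frameT, gcT; simpl. replace (Rabs (-1)) with 1 by (rewrite Rabs_left; lra). rewrite sqrt_1. apply Rinv_1.
Qed.

Lemma frame_off phi p k a s : a <> k -> frameT phi p k a s = 0.
Proof. intros H. unfold frameT. rewrite (proj2 (Nat.eqb_neq a k) H). reflexivity. Qed.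

Lemma Dframe_off phi p k a s : a <> k -> Derive (frameT phi p k a) s = 0.
Proof. intros H. unfold frameT. rewrite (proj2 (Nat.eqb_neq a k) H). apply Derive_const. Qed.

Lemma ex_frame phi p k t : 0 < phi t -> ex_derive phi t -> ex_derive (frameT phi p k k) t.
Proof.
  intros H1 H2. unfold frameT, gcT. rewrite Nat.eqb_refl.
  destruct k as [|k]; simpl. apply ex_derive_const.
  unfold Rpower. auto_derive. repeat split; auto.
  apply Rgt_not_eq, exp_pos. apply Rabs_pos_lt, Rgt_not_eq, exp_pos.
  apply Rgt_not_eq. apply sqrt_lt_R0. apply Rabs_pos_lt, Rgt_not_eq, exp_pos.
Qed.


Lemma DM phi p i j c t :
  locally t (fun s => 0 < phi s /\ ex_derive phi s) -> 0 < phi t -> ex_derive phi t -> ex_derive (Derive phi) t ->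
  (i < 4)%nat -> (j < 4)%nat -> (c < 4)%nat ->
  Derive (nbT phi p (coordT i) (coordT j) c) t = dAclV phi p i j c t.
Proof.
  intros Hl H1 H2 H3 Hi Hj Hc.
  rewrite (Derive_ext_loc _ (Acl phi p i j c)).
  - apply dAcl_val; auto.
  - apply (filter_imp (fun s => 0 < phi s /\ ex_derive phi s)); auto.
    intros s [Hs1 Hs2]. apply M_val; auto.
Qed.

Lemma DNF phi p k j c t :
  locally t (fun s => 0 < phi s /\ ex_derive phi s) -> 0 < phi t -> ex_derive phi t -> ex_derive (Derive phi) t ->
  (k < 4)%nat -> (j < 4)%nat -> (c < 4)%nat ->
  Derive (nbT phi p (frameT phi p k) (coordT j) c) t =
  Derive (frameT phi p k k) t * Acl phi p k j c t + frameT phi p k k t * dAclV phi p k j c t.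
Proof.
  intros Hl H1 H2 H3 Hk Hj Hc.
  rewrite (Derive_ext_loc _ (fun s => frameT phi p k k s * Acl phi p k j c s)).
  - destruct (dAcl_val phi p k j c t H1 H2 H3) as [D E].
    rewrite Derive_mult; auto. rewrite D. reflexivity. apply ex_frame; auto.
  - apply (filter_imp (fun s => 0 < phi s /\ ex_derive phi s)); auto.
    intros s [Hs1 Hs2]. apply NF_val; auto.
Qed.

Lemma curv_val phi p i k j c t :
  locally t (fun s => 0 < phi s /\ ex_derive phi s) -> 0 < phi t -> ex_derive phi t -> ex_derive (Derive phi) t ->
  (i < 4)%nat -> (k < 4)%nat -> (j < 4)%nat -> (c < 4)%nat ->
  curvT phi p (coordT i) (frameT phi p k) (coordT j) c t = frameT phi p k k t * Rcl phi p i k j c t.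
Proof.
  intros Hl H1 H2 H3 Hi Hk Hj Hc. unfold curvT.
  rewrite (nbT_coord phi p i c t (nbT phi p (frameT phi p k) (coordT j))) by auto.
  rewrite (nbT_frame phi p k (nbT phi p (coordT i) (coordT j)) c t) by auto.
  rewrite (nbT_coord phi p k c t (nbT phi p (coordT i) (coordT j))) by auto.
  rewrite (nbT_lin phi p (brT (coordT i) (frameT phi p k)) (coordT j) c t) by auto.
  rewrite DNF, DM by auto.
  unfold sum4. cbn [sum_f_R0].
  rewrite !(NF_val phi p k j _ t H1 H2 Hk Hj) by lia.
  rewrite !(M_val phi p i j _ t H1 H2 Hi Hj) by lia.
  rewrite !(M_val phi p _ j c t H1 H2) by lia.
  unfold brT, Rcl, sum4. cbn [sum_f_R0].
  unfold coordT. rewrite !Derive_const.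
  destruct k as [|[|[|[|k]]]]; try lia;
  repeat match goal with |- context [Derive (frameT ?phi ?p ?k ?a) ?t] =>
     rewrite (Dframe_off phi p k a t) by lia end;
  repeat match goal with |- context [frameT ?phi ?p ?k ?a ?t] =>
     rewrite (frame_off phi p k a t) by lia end;
  rewrite ?frame00;
  destruct i as [|[|[|[|i]]]]; try lia; cbn [Nat.eqb]; ring.
Qed.

Lemma sum4_ext (f g : nat -> R) : (forall k, (k < 4)%nat -> f k = g k) -> sum4 f = sum4 g.
Proof. intros H. unfold sum4. simpl. rewrite !H by lia. reflexivity. Qed.

Lemma Ric_term phi p i k j t :
  locally t (fun s => 0 < phi s /\ ex_derive phi s) -> 0 < phi t -> ex_derive phi t -> ex_derive (Derive phi) t ->
  (i < 4)%nat -> (k < 4)%nat -> (j < 4)%nat ->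
  epsT phi p k t * gmT phi p (fun c => curvT phi p (coordT i) (frameT phi p k) (coordT j) c t)
     (fun c => frameT phi p k c t) t = Rcl phi p i k j k t.
Proof.
  intros Hl H1 H2 H3 Hi Hk Hj.
  unfold epsT, gmT, sum4. cbn [sum_f_R0].
  rewrite !(curv_val phi p i k j _ t Hl H1 H2 H3 Hi Hk Hj) by lia.
  destruct k as [|[|[|[|k]]]]; try lia;
  repeat match goal with |- context [frameT ?phi ?p ?k ?a ?t] =>
     rewrite (frame_off phi p k a t) by lia end.
  - rewrite !frame00. unfold gcT; cbn [Nat.eqb]. ring.
  - unfold frameT, gcT; cbn [Nat.eqb].
    set (G := Rpower (phi t) (2 * p 1%nat)).
    assert (HG : 0 < G) by apply Rpower_pos.
    rewrite Rabs_pos_eq by lra.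
    set (r := sqrt G). assert (Hr : r * r = G) by (apply sqrt_sqrt; lra).
    assert (Hr0 : 0 < r) by (apply sqrt_lt_R0; lra).
    rewrite <- Hr. field. lra.
  - unfold frameT, gcT; cbn [Nat.eqb].
    set (G := Rpower (phi t) (2 * p 2%nat)).
    assert (HG : 0 < G) by apply Rpower_pos.
    rewrite Rabs_pos_eq by lra.
    set (r := sqrt G). assert (Hr : r * r = G) by (apply sqrt_sqrt; lra).
    assert (Hr0 : 0 < r) by (apply sqrt_lt_R0; lra).
    rewrite <- Hr. field. lra.
  - unfold frameT, gcT; cbn [Nat.eqb].
    set (G := Rpower (phi t) (2 * p 3%nat)).
    assert (HG : 0 < G) by apply Rpower_pos.
    rewrite Rabs_pos_eq by lra.
    set (r := sqrt G). assert (Hr : r * r = G) by (apply sqrt_sqrt; lra).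
    assert (Hr0 : 0 < r) by (apply sqrt_lt_R0; lra).
    rewrite <- Hr. field. lra.
Qed.

Lemma Ric_sum phi p i j t :
  locally t (fun s => 0 < phi s /\ ex_derive phi s) -> 0 < phi t -> ex_derive phi t -> ex_derive (Derive phi) t ->
  (i < 4)%nat -> (j < 4)%nat ->
  RicT phi p (coordT i) (coordT j) t = sum4 (fun k => Rcl phi p i k j k t).
Proof.
  intros Hl H1 H2 H3 Hi Hj. unfold RicT. apply sum4_ext. intros k Hk.
  apply Ric_term; auto.
Qed.

Definition RicV phi p (i j : nat) (t : R) : R :=
  let U := uf phi t in let dU := Derive (uf phi) t in
  let z := p 1%nat + p 2%nat + p 3%nat in
  match i, j with
  | O, O => (p 1%nat * dU + p 1%nat ^ 2 * U ^ 2 - p 1%nat * U)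
          + (p 2%nat * dU + p 2%nat ^ 2 * U ^ 2 - p 2%nat * U)
          + (p 3%nat * dU + p 3%nat ^ 2 * U ^ 2 - p 3%nat * U)
  | S _, S _ => if Nat.eqb i j then
       - gk phi p i t * (p i * dU + p i * z * U ^ 2 - 2 * p i * U - z * U + 2) else 0
  | _, _ => 0
  end.

Lemma RicV_ok phi p i j t : (i < 4)%nat -> (j < 4)%nat ->
  sum4 (fun k => Rcl phi p i k j k t) = RicV phi p i j t.
Proof.
  intros Hi Hj.
  destruct i as [|[|[|[|i]]]]; try lia; destruct j as [|[|[|[|j]]]]; try lia;
  unfold Rcl, sum4, Acl, dAclV, RicV; simpl; ring.
Qed.

Lemma Ein_iff (a b : Rbar) phi p lambda :
  (forall t, inI a b t -> 0 < phi t) ->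
  (forall (n : nat) t, inI a b t -> ex_derive_n phi n t) ->
  Einstein a b phi p lambda <->
  (forall t, inI a b t -> forall i j, (i < 4)%nat -> (j < 4)%nat ->
     RicV phi p i j t = lambda * gcT phi p i j t).
Proof.
  intros Hpos Hd.
  assert (K : forall t, inI a b t -> forall i j, (i < 4)%nat -> (j < 4)%nat ->
     RicT phi p (coordT i) (coordT j) t = RicV phi p i j t).
  { intros t Ht i j Hi Hj. rewrite Ric_sum; auto.
    - apply RicV_ok; auto.
    - apply (filter_imp (inI a b)). intros s Hs. split. apply Hpos; auto.
      exact (Hd 1%nat s Hs). apply loc_I; auto.
    - exact (Hd 1%nat t Ht).
    - exact (Hd 2%nat t Ht). }
  split.
  - intros HE t Ht i j Hi Hj. rewrite <- K by auto.
    specialize (HE (fun _ => t) Ht i j Hi Hj). rewrite Ricbar_mk in HE. exact HE.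
  - intros HE x Hx i j Hi Hj. rewrite Ricbar_mk, K by auto. apply HE; auto.
Qed.

Lemma exists_I (a b : Rbar) : Rbar_lt a b -> exists t, inI a b t.
Proof.
  intros H. unfold inI.
  destruct a as [a| |]; destruct b as [b| |]; simpl in *; try contradiction.
  - exists ((a + b) / 2). simpl. split; lra.
  - exists (a + 1). simpl. split; [lra|exact I].
  - exists (b - 1). simpl. split; [exact I|lra].
  - exists 0. simpl. split; exact I.
Qed.

Lemma I_convex (a b : Rbar) x y z : inI a b x -> inI a b y -> Rmin x y <= z <= Rmax x y -> inI a b z.
Proof.
  intros [H1 H2] [H3 H4] [H5 H6]. split.
  - destruct a as [a| |]; simpl in *; try contradiction; auto.
    unfold Rmin in H5.
    destruct (Rle_dec x y); lra.
  - destruct b as [b| |]; simpl in *; try contradiction; auto.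
    unfold Rmax in H6. destruct (Rle_dec x y); lra.
Qed.

Lemma ode (a b : Rbar) (phi : R -> R) (k t0 : R) :
  (forall t, inI a b t -> ex_derive phi t) ->
  (forall t, inI a b t -> Derive phi t = k * phi t) -> inI a b t0 ->
  forall t, inI a b t -> phi t = (phi t0 * exp (- k * t0)) * exp (k * t).
Proof.
  intros Hd HD Ht0 t Ht.
  set (psi := fun s => phi s * exp (- k * s)).
  assert (Hder : forall x, inI a b x -> is_derive psi x 0).
  { intros x Hx. unfold psi. auto_derive. apply Hd; auto.
    rewrite HD by auto. ring. }
  destruct (MVT_gen psi t0 t (fun _ => 0)) as [c [Hc Hm]].
  - intros x Hx. apply Hder. apply (I_convex a b t0 t); auto. lra.
  - intros x Hx. apply derivable_continuous_pt. exists 0.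
    apply is_derive_Reals. apply Hder.
    apply (I_convex a b t0 t); auto.
  - unfold psi in Hm.
    assert (E : phi t * exp (- k * t) = phi t0 * exp (- k * t0)) by lra.
    rewrite <- E. rewrite Rmult_assoc, <- exp_plus.
    replace (- k * t + k * t) with 0 by ring. rewrite exp_0. ring.
Qed.

Lemma alg1 p1 p2 p3 U dU l : ~ (p1 = p2 /\ p2 = p3) ->
  p1 * dU + p1 * (p1 + p2 + p3) * U ^ 2 - 2 * p1 * U - (p1 + p2 + p3) * U + 2 = - l ->
  p2 * dU + p2 * (p1 + p2 + p3) * U ^ 2 - 2 * p2 * U - (p1 + p2 + p3) * U + 2 = - l ->
  p3 * dU + p3 * (p1 + p2 + p3) * U ^ 2 - 2 * p3 * U - (p1 + p2 + p3) * U + 2 = - l ->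
  dU = 2 * U - (p1 + p2 + p3) * U ^ 2 /\ (p1 + p2 + p3) * U = 2 + l.
Proof.
  intros Hp E1 E2 E3.
  set (Q := dU + (p1 + p2 + p3) * U ^ 2 - 2 * U).
  assert (A : (p1 - p2) * Q = 0) by (unfold Q; nra).
  assert (B : (p2 - p3) * Q = 0) by (unfold Q; nra).
  assert (HQ : Q = 0).
  { destruct (Req_dec Q 0) as [h|h]; auto. exfalso. apply Hp.
    apply Rmult_integral in A. apply Rmult_integral in B. split.
    destruct A; [lra|contradiction]. destruct B; [lra|contradiction]. }
  split. unfold Q in HQ. lra.
  assert (E : p1 * Q - (p1 + p2 + p3) * U + 2 = - l) by (unfold Q; nra).
  rewrite HQ in E. lra.
Qed.

Theorem theorem4p30 (a b : Rbar) (phi : R -> R) (p1 p2 p3 : R) :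
  Rbar_lt a b ->
  (forall t, inI a b t -> 0 < phi t) ->
  (forall (n : nat) t, inI a b t -> ex_derive_n phi n t) ->
  ~ (p1 = p2 /\ p2 = p3) ->
  forall lambda : R,
    Einstein a b phi (pvec p1 p2 p3) lambda <->
    (lambda = 0 /\
     2 * (p1 ^ 2 + p2 ^ 2 + p3 ^ 2) / (p1 + p2 + p3) ^ 2 = 1 /\
     exists c0 : R, forall t, inI a b t ->
       phi t = c0 * exp (2 * t / (p1 + p2 + p3))).
Proof.
  intros Hab Hpos Hd Hp lambda.
  rewrite (Ein_iff a b phi (pvec p1 p2 p3) lambda Hpos Hd).
  assert (HD1 : forall t, inI a b t -> ex_derive phi t) by (intros t Ht; exact (Hd 1%nat t Ht)).
  assert (HD2 : forall t, inI a b t -> ex_derive (Derive phi) t) by (intros t Ht; exact (Hd 2%nat t Ht)).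
  destruct (exists_I a b Hab) as [t0 Ht0].
  split.
  - intros HE.
    assert (Eq : forall t, inI a b t ->
       Derive (uf phi) t = 2 * uf phi t - (p1 + p2 + p3) * uf phi t ^ 2 /\
       (p1 + p2 + p3) * uf phi t = 2 + lambda /\
       (p1 + p2 + p3) * Derive (uf phi) t + (p1^2+p2^2+p3^2) * uf phi t ^ 2
         - (p1 + p2 + p3) * uf phi t = - lambda).
    { intros t Ht.
      assert (G1 := Rpower_pos (phi t) (2 * p1)).
      assert (G2 := Rpower_pos (phi t) (2 * p2)).
      assert (G3 := Rpower_pos (phi t) (2 * p3)).
      pose proof (HE t Ht 0%nat 0%nat ltac:(lia) ltac:(lia)) as E0.
      pose proof (HE t Ht 1%nat 1%nat ltac:(lia) ltac:(lia)) as E1.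
      pose proof (HE t Ht 2%nat 2%nat ltac:(lia) ltac:(lia)) as E2.
      pose proof (HE t Ht 3%nat 3%nat ltac:(lia) ltac:(lia)) as E3.
      unfold RicV, gcT, gk in E0, E1, E2, E3; simpl in E0, E1, E2, E3.
      set (U := uf phi t) in *. set (dU := Derive (uf phi) t) in *.
      set (G1' := Rpower (phi t) (2 * p1)) in *.
      set (G2' := Rpower (phi t) (2 * p2)) in *.
      set (G3' := Rpower (phi t) (2 * p3)) in *.
      assert (Q1 : p1 * dU + p1 * (p1 + p2 + p3) * U ^ 2 - 2 * p1 * U - (p1 + p2 + p3) * U + 2 = - lambda).
      { apply (Rmult_eq_reg_l G1'); [nra | lra]. }
      assert (Q2 : p2 * dU + p2 * (p1 + p2 + p3) * U ^ 2 - 2 * p2 * U - (p1 + p2 + p3) * U + 2 = - lambda).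
      { apply (Rmult_eq_reg_l G2'); [nra | lra]. }
      assert (Q3 : p3 * dU + p3 * (p1 + p2 + p3) * U ^ 2 - 2 * p3 * U - (p1 + p2 + p3) * U + 2 = - lambda).
      { apply (Rmult_eq_reg_l G3'); [nra | lra]. }
      destruct (alg1 p1 p2 p3 U dU lambda Hp Q1 Q2 Q3) as [A B].
      split; [exact A|]. split; [exact B|]. nra. }
    set (eta := p1^2+p2^2+p3^2) in *.
    destruct (Req_dec (p1 + p2 + p3) 0) as [Hz|Hz].
    + exfalso.
      destruct (Eq t0 Ht0) as [A0 [B0 C0]].
      assert (Hl : lambda = -2) by (rewrite Hz in B0; lra).
      assert (Hq : forall t, inI a b t -> eta * uf phi t ^ 2 = 2).
      { intros t Ht. destruct (Eq t Ht) as [_ [_ C]]. rewrite Hz in C. lra. }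
      assert (Heta : eta <> 0).
      { intro h. specialize (Hq t0 Ht0). rewrite h in Hq. lra. }
      assert (D0 : Derive (fun s => uf phi s ^ 2) t0 = 0).
      { rewrite (Derive_ext_loc _ (fun _ => 2 / eta)). apply Derive_const.
        apply (filter_imp (inI a b)). intros s Hs. rewrite <- (Hq s Hs). field. auto.
        apply loc_I; auto. }
      assert (D1 : Derive (fun s => uf phi s ^ 2) t0 = 2 * uf phi t0 * Derive (uf phi) t0).
      { apply is_derive_unique. auto_derive.
        apply ex_uf; auto. change (fun x : R => uf phi x) with (uf phi). ring. }
      rewrite Hz in A0. specialize (Hq t0 Ht0). rewrite D0 in D1.
      set (U := uf phi t0) in *. set (dU := Derive (uf phi) t0) in *.
      assert (E : dU = 2 * U) by lra. rewrite E in D1.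
      assert (E2 : U * U = 0) by lra.
      apply Rmult_integral in E2. assert (U = 0) by (destruct E2; auto).
      rewrite H in Hq. lra.
    + assert (HU : forall t, inI a b t -> uf phi t = (2 + lambda) / (p1 + p2 + p3)).
      { intros t Ht. destruct (Eq t Ht) as [_ [B _]]. rewrite <- B. field. auto. }
      assert (HdU : Derive (uf phi) t0 = 0).
      { rewrite (Derive_ext_loc _ (fun _ => (2 + lambda) / (p1 + p2 + p3))). apply Derive_const.
        apply (filter_imp (inI a b)). intros s Hs. apply HU; auto. apply loc_I; auto. }
      destruct (Eq t0 Ht0) as [A0 [B0 C0]].
      rewrite HdU in A0, C0.
      assert (Hl : lambda = 0).
      { destruct (Req_dec (uf phi t0) 0) as [h|h].
        - rewrite h in B0, C0. lra.
        - assert (uf phi t0 * (2 - (p1 + p2 + p3) * uf phi t0) = 0) by nra.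
          apply Rmult_integral in H. destruct H as [H|H]; [contradiction|lra]. }
      subst lambda. split; [reflexivity|]. split.
      * assert (A : eta * ((p1 + p2 + p3) * uf phi t0) ^ 2 = 2 * (p1 + p2 + p3) ^ 2).
        { replace (eta * ((p1 + p2 + p3) * uf phi t0) ^ 2) with
            ((p1 + p2 + p3) ^ 2 * (eta * uf phi t0 ^ 2)) by ring.
          replace (eta * uf phi t0 ^ 2) with 2 by lra. ring. }
        rewrite B0 in A. replace (2 * eta) with ((p1 + p2 + p3) ^ 2) by (ring_simplify in A; lra). field. auto.
      * exists (phi t0 * exp (- (2 / (p1 + p2 + p3)) * t0)). intros t Ht.
        rewrite (ode a b phi (2 / (p1 + p2 + p3)) t0 HD1) with (t := t); auto.
        -- f_equal. f_equal. field. auto.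
        -- intros s Hs. specialize (HU s Hs). unfold uf in HU.
           assert (Hps := Hpos s Hs).
           replace (Derive phi s) with (Derive phi s / phi s * phi s) by (field; lra).
           rewrite HU. f_equal. field. auto.
  - intros [Hl [Heta [c0 Hphi]]].
    assert (Hz : p1 + p2 + p3 <> 0).
    { intro h. rewrite h in Heta. replace (0 ^ 2) with 0 in Heta by ring.
      unfold Rdiv in Heta. rewrite Rinv_0 in Heta. lra. }
    assert (HU : forall t, inI a b t -> uf phi t = 2 / (p1 + p2 + p3)).
    { intros t Ht. unfold uf.
      rewrite (Derive_ext_loc phi (fun s => c0 * exp (2 * s / (p1 + p2 + p3)))).
      - assert (Hp0 := Hpos t Ht). rewrite (Hphi t Ht) in Hp0 |- *.
        assert (He := exp_pos (2 * t / (p1 + p2 + p3))).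
        assert (Hc : c0 <> 0) by (intro h; rewrite h in Hp0; lra).
        rewrite (is_derive_unique _ _ (c0 * (2 / (p1 + p2 + p3) * exp (2 * t / (p1 + p2 + p3))))).
        field. split; auto. lra.
        auto_derive; auto. unfold Rdiv. rewrite Rmult_1_r. reflexivity.
      - apply (filter_imp (inI a b)). intros s Hs. apply Hphi; auto. apply loc_I; auto. }
    assert (HdU : forall t, inI a b t -> Derive (uf phi) t = 0).
    { intros t Ht. rewrite (Derive_ext_loc _ (fun _ => 2 / (p1 + p2 + p3))). apply Derive_const.
      apply (filter_imp (inI a b)). intros s Hs. apply HU; auto. apply loc_I; auto. }
    assert (H2 : p1 ^ 2 = (p1 + p2 + p3) ^ 2 / 2 - p2 ^ 2 - p3 ^ 2).
    { assert (2 * (p1 ^ 2 + p2 ^ 2 + p3 ^ 2) = (p1 + p2 + p3) ^ 2).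
      { rewrite <- (Rmult_1_r ((p1 + p2 + p3) ^ 2)). rewrite <- Heta. field. auto. }
      lra. }
    subst lambda.
    intros t Ht i j Hi Hj.
    destruct i as [|[|[|[|i]]]]; try lia; destruct j as [|[|[|[|j]]]]; try lia;
    unfold RicV, gcT, gk; simpl; rewrite ?HU, ?HdU by auto; try ring.
    all: field_simplify; [ | auto]; unfold Rdiv; match goal with |- ?n * _ = 0 => replace n with 0 by nra; ring end.
Qed.
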